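(* Assume $\xi_v\ge0$ for all $v$, $\pi_v>0$ for all $v\in\mathcal V$, and that the numbers $\{M_i\xi_i\}_{i\in\mathcal V}$ are not all equal. Then for all $\alpha,c\in\mathbb R$, the point $$\boldsymbol\alpha^\star=\alpha\mathbf 1,\qquad \boldsymbol\beta^\star=c\,\mathbf 1-e^{-\alpha}\,\boldsymbol M\circ\boldsymbol\xi$$ is a stationary point of the gradient flow $(\dot{\boldsymbol\alpha},\dot{\boldsymbol\beta})=-\nabla_{\boldsymbol\alpha,\boldsymbol\beta}\mathrm{loss}(\boldsymbol\alpha,\boldsymbol\beta)$, and every such point is a global minimizer of $\mathrm{loss}$.
   Context: Let $\mathcal V=\{1,\dots,V\}$ with trigger set $\mathcal T\subseteq\mathcal V$; $\mathbf P=(p_{vk})$ row-stochastic; weights $\pi_v$ and $\tilde\pi_v=\pi_v\mathbf 1\{v\notin\mathcal T\}$. Fix nonnegative integers $M_k$ with $M=\sum_kM_k>0$, reals $\xi_k\ge0$, and write $\boldsymbol M=(M_1,\dots,M_V)$, $\boldsymbol\xi=(\xi_1,\dots,\xi_V)$, $\circ$ for the entrywise product, $\mathbf 1$ for the all-ones vector. For $\boldsymbol\alpha,\boldsymbol\beta\in\mathbb R^V$, $$l_{vi}=\frac{p_{vi}\exp\!\big(\frac{M_i\xi_i+e^{\alpha_v}\beta_i}{e^{\alpha_v}+M}\big)}{\sum_{k} p_{vk}\exp\!\big(\frac{M_k\xi_k+e^{\alpha_v}\beta_k}{e^{\alpha_v}+M}\big)},$$ $\mathrm{loss}_v(\alpha_v,\boldsymbol\beta)=\sum_k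 p_{vk}\log(p_{vk}/l_{vk})$ (with $0\log 0=0$), $\mathrm{loss}(\boldsymbol\alpha,\boldsymbol\beta)=\sum_{v}\tilde\pi_v\mathrm{loss}_v(\alpha_v,\boldsymbol\beta)$. *)

(* Defs.v *)
From mathcomp Require Import all_boot all_order all_algebra.
From mathcomp Require Import all_classical all_reals all_analysis.
Set Implicit Arguments. Unset Strict Implicit. Unset Printing Implicit Defensive.
Import Order.TTheory GRing.Theory Num.Theory.
Local Open Scope ring_scope.

Section Defs.
Variables (R : realType) (V : nat).
Variables (T : {set 'I_V}) (P : 'I_V -> 'I_V -> R) (pi xi : 'I_V -> R)
  (M : 'I_V -> nat).

Definition Mtot : R := (\sum_k M k)%:R.

Definition expo (i : 'I_V) (av : R) (b : 'I_V -> R) : R :=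
  ((M i)%:R * xi i + expR av * b i) / (expR av + Mtot).

Definition lvi (v i : 'I_V) (av : R) (b : 'I_V -> R) : R :=
  P v i * expR (expo i av b) / \sum_k P v k * expR (expo k av b).

Definition lossv (v : 'I_V) (av : R) (b : 'I_V -> R) : R :=
  \sum_k (if P v k == 0 then 0 else P v k * ln (P v k / lvi v k av b)).

Definition pitilde (v : 'I_V) : R := if v \in T then 0 else pi v.

Definition loss (a b : 'I_V -> R) : R := \sum_v pitilde v * lossv v (a v) b.
End Defs.

Definition upd (R : Type) (V : nat) (f : 'I_V -> R) (v : 'I_V) (t : R) : 'I_V -> R :=
  fun w => if w == v then t else f w.

(* Main.v *)
Require Import Defs.
From mathcomp Require Import all_boot all_order all_algebra.
From mathcomp Require Import all_classical all_reals all_analysis.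
Import Order.TTheory GRing.Theory Num.Theory.
From mathcomp Require Import lra.
Local Open Scope ring_scope.

Set Implicit Arguments. Unset Strict Implicit.
Section D.
Variable R : realType.
Definition D (f : R -> R) := forall t, derivable f t 1.

Lemma dC (c : R) : D (fun _ => c).
Proof. by move=> t; exact: derivable_cst. Qed.
Lemma dId : D (fun t => t).
Proof. by move=> t; exact: derivable_id. Qed.
Lemma dM f g : D f -> D g -> D (fun t => f t * g t).
Proof. by move=> df dg t; have := derivableM (df t) (dg t). Qed.
Lemma dDD f g : D f -> D g -> D (fun t => f t + g t).
Proof. by move=> df dg t; have := derivableD (df t) (dg t). Qed.
Lemma dV f : D f -> (forall t, f t != 0) -> D (fun t => (f t)^-1).
Proof. by move=> df nz t; exact: derivableV. Qed.
Lemma dcomp f (g : R -> R) : D f -> D g -> D (fun t => g (f t)).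
Proof.
move=> df dg t; apply/derivable1_diffP.
have := @differentiable_comp R R R R f g t.
by apply; apply/derivable1_diffP.
Qed.
Lemma dexp f : D f -> D (fun t => expR (f t)).
Proof. by move=> df; apply: dcomp => // t; exact: derivable_expR. Qed.
Lemma dsum n (F : 'I_n -> R -> R) : (forall i, D (F i)) -> D (fun t => \sum_i F i t).
Proof.
move=> dF t; have := derivable_sum (fun i => dF i t).
suff -> : (\sum_(i < n) F i) = (fun t => \sum_i F i t) by [].
apply/funext => s; elim/big_rec2: _ => //= i y g _ <-. by [].
Qed.
End D.
Section L.
Variables (R : realType) (V : nat).
Variables (T : {set 'I_V}) (P : 'I_V -> 'I_V -> R) (pi xi : 'I_V -> R)
  (M : 'I_V -> nat).
Hypothesis P0 : forall v k, 0 <= P v k.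
Hypothesis P1 : forall v, \sum_k P v k = 1.

Lemma dln (f : R -> R) : D f -> (forall t, 0 < f t) -> D (fun t => ln (f t)).
Proof.
move=> df pf t; apply/derivable1_diffP.
have := @differentiable_comp R R R R f (@ln R) t.
apply; first exact/derivable1_diffP.
apply/derivable1_diffP; apply: ex_derive; exact: is_derive1_ln.
Qed.

Lemma Mtot_ge0 : 0 <= Mtot R M.
Proof. by rewrite /Mtot ler0n. Qed.

Lemma Z_gt0 v av b : 0 < \sum_k P v k * expR (expo xi M k av b).
Proof.
rewrite lt_def sumr_ge0 ?andbT; last by move=> k _; rewrite mulr_ge0 ?expR_ge0.
apply/negP => /eqP /psumr_eq0P H.
have H' := H (fun k _ => mulr_ge0 (P0 v k) (expR_ge0 (expo xi M k av b))).
have : \sum_k P v k = 0.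
  apply: big1 => k _; have /eqP := H' k isT.
  by rewrite mulf_eq0 (gt_eqF (expR_gt0 _)) orbF => /eqP.
by rewrite P1 => /eqP; rewrite oner_eq0.
Qed.

Lemma dexpo i (A : R -> R) (B : R -> 'I_V -> R) : D A -> D (fun t => B t i) ->
  D (fun t => expo xi M i (A t) (B t)).
Proof.
move=> dA dB; rewrite /expo; apply: dM.
  apply: dDD; first exact: dC.
  by apply: dM => //; exact: dexp.
apply: dV; first by apply: dDD; [exact: dexp|exact: dC].
move=> t; rewrite gt_eqF //; apply: (lt_le_trans (expR_gt0 (A t))); by rewrite lerDl Mtot_ge0.
Qed.

Lemma dloss (A B : R -> 'I_V -> R) : (forall v, D (fun t => A t v)) ->
  (forall v, D (fun t => B t v)) -> D (fun t => loss T P pi xi M (A t) (B t)).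
Proof.
move=> dA dB; rewrite /loss; apply: dsum => v; apply: dM; first exact: dC.
rewrite /lossv; apply: dsum => k.
case: eqP => [_|Pk]; first exact: dC.
have Pkp : 0 < P v k by rewrite lt_def P0 andbT; apply/eqP.
apply: dM; first exact: dC.
apply: dln.
  apply: dM; first exact: dC.
  rewrite /lvi; apply: dV.
    apply: dM; last apply: dV.
    - by apply: dM; [exact: dC| apply: dexp; exact: dexpo].
    - by apply: dsum => j; apply: dM; [exact: dC| apply: dexp; exact: dexpo].
    - by move=> t; rewrite gt_eqF // Z_gt0.
  by move=> t; rewrite gt_eqF // divr_gt0 ?mulr_gt0 ?expR_gt0 ?Z_gt0.
by move=> t; rewrite /lvi divr_gt0 // divr_gt0 ?Z_gt0 // mulr_gt0 ?expR_gt0.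
Qed.
End L.

Section M.
Variables (R : realType) (V : nat).
Variables (T : {set 'I_V}) (P : 'I_V -> 'I_V -> R) (pi xi : 'I_V -> R)
  (M : 'I_V -> nat).
Hypothesis P0 : forall v k, 0 <= P v k.
Hypothesis P1 : forall v, \sum_k P v k = 1.

Lemma sum_lvi v av b : \sum_k lvi P xi M v k av b = 1.
Proof.
rewrite /lvi -mulr_suml divff // gt_eqF // Z_gt0 //.
Qed.

Lemma lossv_ge0 v av b : 0 <= lossv P xi M v av b.
Proof.
have : \sum_k (P v k - lvi P xi M v k av b) <= lossv P xi M v av b.
  rewrite /lossv; apply: ler_sum => k _.
  case: eqP => [Pk|Pk].
    by rewrite /lvi Pk !mul0r subr0.
  have Pkp : 0 < P v k by rewrite lt_def P0 andbT; apply/eqP.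
  have lp : 0 < lvi P xi M v k av b.
    by rewrite /lvi divr_gt0 ?Z_gt0 // mulr_gt0 ?expR_gt0.
  set l := lvi P xi M v k av b in lp *.
  set p := P v k in Pkp *.
  have yp : 0 < l / p by rewrite divr_gt0.
  have ly : ln (l / p) <= l / p - 1.
    have := @le_ln1Dx R (l / p - 1); rewrite addrCA subrr addr0; apply.
    by rewrite ltrBrDl addrN.
  rewrite -invf_div lnV ?posrE //.
  have -> : p - l = p * (1 - l / p).
    by rewrite mulrBr mulr1 mulrCA divff ?gt_eqF // mulr1.
  apply: ler_wpM2l; [exact: ltW | lra].
by rewrite sumrB P1 sum_lvi subrr.
Qed.

Lemma loss_ge0 a b : (forall v, 0 <= pi v) -> 0 <= loss T P pi xi M a b.
Proof.
move=> pi0; rewrite /loss sumr_ge0 // => v _; rewrite mulr_ge0 ?lossv_ge0 //.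
by rewrite /pitilde; case: ifP.
Qed.

Lemma loss_star alpha c :
  loss T P pi xi M (fun _ => alpha) (fun k => c - expR (- alpha) * ((M k)%:R * xi k)) = 0.
Proof.
rewrite /loss big1 // => v _.
suff -> : lossv P xi M v alpha (fun k => c - expR (- alpha) * ((M k)%:R * xi k)) = 0
  by rewrite mulr0.
set E := expR (expR alpha * c / (expR alpha + Mtot R M)).
have eE : forall k, expR (expo xi M k alpha (fun k => c - expR (- alpha) * ((M k)%:R * xi k))) = E.
  move=> k; rewrite /E /expo.
  suff -> : (M k)%:R * xi k + expR alpha * (c - expR (- alpha) * ((M k)%:R * xi k))
     = expR alpha * c by [].
  rewrite mulrBr !mulrA expRN divff ?gt_eqF ?expR_gt0 // mul1r.
  by rewrite addrC subrK.
rewrite /lossv big1 // => k _; case: eqP => // Pk.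
rewrite /lvi; under eq_bigr => j _ do rewrite eE.
rewrite eE -mulr_suml P1 mul1r mulfK ?gt_eqF ?expR_gt0 //.
rewrite divff; last exact/eqP.
by rewrite ln1 mulr0.
Qed.
End M.
Lemma upd_same (R : Type) (V : nat) (f : 'I_V -> R) v : upd f v (f v) = f.
Proof. by apply/funext => w; rewrite /upd; case: eqP => // ->. Qed.
Lemma dupd (R : realType) (V : nat) (f : 'I_V -> R) v w : D (fun t => upd f v t w).
Proof. rewrite /upd; case: eqP => _; [exact: dId | exact: dC]. Qed.

Unset Implicit Arguments. Set Strict Implicit.
Theorem theorem2 (R : realType) (V : nat) (T : {set 'I_V})
  (P : 'I_V -> 'I_V -> R) (pi xi : 'I_V -> R) (M : 'I_V -> nat) :
  (forall v k, 0 <= P v k) ->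
  (forall v, \sum_k P v k = 1) ->
  (0 < \sum_k M k)%N ->
  (forall k, 0 <= xi k) ->
  (forall v, 0 < pi v) ->
  (exists i j, (M i)%:R * xi i != (M j)%:R * xi j) ->
  forall alpha c : R,
  let astar : 'I_V -> R := fun _ => alpha in
  let bstar : 'I_V -> R := fun k => c - expR (- alpha) * ((M k)%:R * xi k) in
  let L := loss T P pi xi M in
  [/\ (forall v : 'I_V,
         is_derive (astar v) 1 (fun t : R => L (upd astar v t) bstar) 0),
      (forall k : 'I_V,
         is_derive (bstar k) 1 (fun t : R => L astar (upd bstar k t)) 0)
    & (forall a b : 'I_V -> R, L astar bstar <= L a b)].
Proof.
move=> P0 P1 _ _ pi0 _ alpha c astar bstar L.
have pi0' : forall v, 0 <= pi v by move=> v; exact: ltW.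
have Lmin : forall a b, L astar bstar <= L a b.
  by move=> a b; rewrite /L loss_star // loss_ge0.
split => //.
- move=> v; apply: (@derive1_at_min _ _ (astar v - 1) (astar v + 1)).
  + lra.
  + move=> t _; rewrite /L; apply: (@dloss _ _ T P pi xi M P0 P1 (fun t => upd astar v t) (fun _ => bstar)) => w; [exact: dupd | exact: dC].
  + rewrite in_itv /=; apply/andP; split; lra.
  + by move=> t _; rewrite upd_same.
- move=> k; apply: (@derive1_at_min _ _ (bstar k - 1) (bstar k + 1)).
  + lra.
  + move=> t _; rewrite /L; apply: (@dloss _ _ T P pi xi M P0 P1 (fun _ => astar) (fun t => upd bstar k t)) => w; [exact: dC | exact: dupd].
  + rewrite in_itv /=; apply/andP; split; lra.
  + by move=> t _; rewrite upd_same.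
Qed.
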